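(* Let $\mathcal{M}\subseteq\mathbb{S}^n$ and $B\in\mathbb{S}^n$. If $\mathcal{S}(\mathcal{M})$ is rank-one generated, then $$\inf_{x\in\mathbb{R}^n}\{x^\top M_0x:\ x^\top Mx\ge0\ \forall M\in\mathcal{M},\ x^\top Bx=1\}=\inf_{X\in\mathbb{S}^n}\{\langle M_0,X\rangle:\ \langle M,X\rangle\ge0\ \forall M\in\mathcal{M},\ \langle B,X\rangle=1,\ X\succeq0\}$$ for all $M_0\in\mathbb{S}^n$ for which the optimal value of the right-hand (SDP) problem is bounded from below. In particular, this equality holds whenever the feasible domain of the right-hand problem is bounded.
   Context: $\mathbb{S}^n$ denotes real symmetric $n\times n$ matrices with $\langle A,B\rangle=\mathrm{tr}(AB)$, $\mathbb{S}^n_+$ the PSD cone, $X\succeq0$ means $X$ is PSD. For $\mathcal{M}\subseteq\mathbb{S}^n$, $\mathcal{S}(\mathcal{M})=\{X\in\mathbb{S}^n_+:\langle M,X\rangle\ge0\ \forall M\in\mathcal{M}\}$. A closed convex cone $\mathcal{S}\subseteq\mathbb{S}^n_+$ is rank-one generated (ROG) if $\mathcal{S}=\mathrm{conv}(\mathcal{S}\cap\{xx^\top:x\in\mathbb{R}^n\})$. *)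

(* Defs.v *)
From HB Require Import structures.
From mathcomp Require Import all_boot all_order all_algebra.
From mathcomp Require Import all_classical all_reals ereal.
Set Implicit Arguments. Unset Strict Implicit. Unset Printing Implicit Defensive.
Import Order.TTheory GRing.Theory Num.Theory.
Local Open Scope ring_scope.
Local Open Scope classical_set_scope.

Section Defs.
Variables (R : realType) (n : nat).
Local Notation M := 'M[R]_n.

Definition symmx (A : M) : Prop := A^T = A.

Definition frob (A B : M) : R := \tr (A *m B).

Definition qform (A : M) (x : 'cV[R]_n) : R := (x^T *m A *m x) 0 0.

Definition psd (X : M) : Prop := symmx X /\ forall x : 'cV[R]_n, 0 <= qform X x.

Definition Scone (Ms : set M) : set M :=
  [set X | psd X /\ forall A, Ms A -> 0 <= frob A X].

Definition rank_one_set : set M := [set X | exists x : 'cV[R]_n, X = x *m x^T].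

Definition convhull (A : set M) : set M :=
  [set X | exists (k : nat) (lam : 'I_k -> R) (Y : 'I_k -> M),
      (forall i, 0 <= lam i) /\ \sum_(i < k) lam i = 1 /\
      (forall i, A (Y i)) /\ X = \sum_(i < k) lam i *: Y i].

Definition ROG (S : set M) : Prop := S = convhull (S `&` rank_one_set).

Definition qcqp_feas (Ms : set M) (B : M) : set 'cV[R]_n :=
  [set x | (forall A, Ms A -> 0 <= qform A x) /\ qform B x = 1].

Definition sdp_feas (Ms : set M) (B : M) : set M :=
  [set X | (forall A, Ms A -> 0 <= frob A X) /\ frob B X = 1 /\ psd X].

(* optimal values, in the extended reals (inf of empty set = +oo) *)
Definition qcqp_val (Ms : set M) (B M0 : M) : \bar R :=
  ereal_inf [set (qform M0 x)%:E | x in qcqp_feas Ms B].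

Definition sdp_val (Ms : set M) (B M0 : M) : \bar R :=
  ereal_inf [set (frob M0 X)%:E | X in sdp_feas Ms B].

End Defs.

(* Main.v *)
Require Import Defs.
From HB Require Import structures.
From mathcomp Require Import all_boot all_order all_algebra.
From mathcomp Require Import all_classical all_reals ereal.
From mathcomp Require Import ring lra.
Import Order.TTheory GRing.Theory Num.Theory.
Local Open Scope ring_scope.
Local Open Scope classical_set_scope.

Section Aux.
Variables (R : realType) (n : nat).
Implicit Types (A X Y : 'M[R]_n) (x : 'cV[R]_n).

Lemma frobDr A X Y : frob A (X + Y) = frob A X + frob A Y.
Proof. by rewrite /frob mulmxDr mxtraceD. Qed.

Lemma frobZr A (a : R) X : frob A (a *: X) = a * frob A X.
Proof. by rewrite /frob -scalemxAr mxtraceZ. Qed.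

Lemma frobDl A X Y : frob (X + Y) A = frob X A + frob Y A.
Proof. by rewrite /frob mulmxDl mxtraceD. Qed.

Lemma frobZl A (a : R) X : frob (a *: X) A = a * frob X A.
Proof. by rewrite /frob -scalemxAl mxtraceZ. Qed.

Lemma frob_sumr A k (lam : 'I_k -> R) (Y : 'I_k -> 'M[R]_n) :
  frob A (\sum_(i < k) lam i *: Y i) = \sum_(i < k) lam i * frob A (Y i).
Proof.
elim/big_ind2: _ => //.
- by rewrite /frob mulmx0 linear0.
- by move=> ? ? ? ? <- <-; rewrite frobDr.
- by move=> i _; rewrite frobZr.
Qed.

Lemma qform_frob A x : qform A x = frob A (x *m x^T).
Proof.
rewrite /frob /qform mulmxA mxtrace_mulC mulmxA trace_mx11.
by [].
Qed.

Lemma psdD X Y : psd X -> psd Y -> psd (X + Y).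
Proof.
move=> [sX pX] [sY pY]; split.
  by rewrite /symmx linearD /= sX sY.
by move=> x; rewrite qform_frob frobDl -!qform_frob addr_ge0.
Qed.

Lemma psdZ (a : R) X : 0 <= a -> psd X -> psd (a *: X).
Proof.
move=> a0 [sX pX]; split.
  by rewrite /symmx linearZ /= sX.
by move=> x; rewrite qform_frob frobZl -qform_frob mulr_ge0.
Qed.

Lemma psd_rank1 x : psd (x *m x^T).
Proof.
split; first by rewrite /symmx trmx_mul trmxK.
move=> y; rewrite /qform.
have -> : y^T *m (x *m x^T) *m y = (y^T *m x) *m (y^T *m x)^T.
  by rewrite trmx_mul trmxK !mulmxA.
set u := y^T *m x. by rewrite mxE big_ord1 [u^T _ _]mxE -expr2 sqr_ge0.
Qed.

Lemma SconeD Ms X Y : Scone Ms X -> Scone Ms Y -> Scone Ms (X + Y).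
Proof.
move=> [pX cX] [pY cY]; split; first exact: psdD.
by move=> A MA; rewrite frobDr addr_ge0 ?cX ?cY.
Qed.

Lemma SconeZ Ms (a : R) X : 0 <= a -> Scone Ms X -> Scone Ms (a *: X).
Proof.
move=> a0 [pX cX]; split; first exact: psdZ.
by move=> A MA; rewrite frobZr mulr_ge0 ?cX.
Qed.

Lemma sdp_le_qcqp (Ms : set 'M[R]_n) (B M0 : 'M[R]_n) : (sdp_val Ms B M0 <= qcqp_val Ms B M0)%E.
Proof.
apply/ereal_infP => _ [x [cx Bx] <-].
apply: ereal_inf_lbound; exists (x *m x^T); last by rewrite qform_frob.
split; first by move=> A MA; rewrite -qform_frob cx.
by split; [rewrite -qform_frob | exact: psd_rank1].
Qed.

End Aux.

Lemma part1 (R : realType) (n : nat) (Ms : set 'M[R]_n) (B : 'M[R]_n) :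
  ROG (Scone Ms) -> forall M0 : 'M[R]_n,
  (exists c : R, forall X, sdp_feas Ms B X -> c <= frob M0 X) ->
  qcqp_val Ms B M0 = sdp_val Ms B M0.
Proof.
move=> hROG M0 [c hc].
apply/le_anti/andP; split; last exact: sdp_le_qcqp.
apply/ereal_infP => _ [X HX <-].
have key : forall Z, Scone Ms Z -> frob B Z = 0 -> 0 <= frob M0 Z.
  move=> Z SZ BZ; rewrite leNgt; apply/negP => Hneg.
  have cX := hc X HX.
  pose t := (frob M0 X - c + 1) / (- frob M0 Z).
  have t0 : 0 <= t by rewrite /t divr_ge0 ?oppr_ge0 ?ltW //; lra.
  have F : sdp_feas Ms B (X + t *: Z).
    case: HX => cA [BX pX]; case: SZ => pZ cZ.
    split.
      move=> A MA; rewrite frobDr frobZr; apply: addr_ge0; first exact: cA.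
      by apply: mulr_ge0 => //; apply: cZ.
    split; first by rewrite frobDr frobZr BZ mulr0 addr0.
    by apply: psdD => //; apply: psdZ.
  have := hc _ F; rewrite frobDr frobZr.
  have -> : t * frob M0 Z = - (frob M0 X - c + 1).
    rewrite /t -mulrA mulrC invrN mulNr mulVf ?mulN1r //.
    by rewrite lt_eqF.
  lra.
have SX : Scone Ms X by case: HX => cA [_ pX].
have := SX; rewrite hROG => -[k [lam [Y [l0 [l1 [YS EX]]]]]].
pose b i := frob B (Y i). pose m i := frob M0 (Y i).
have Bsum : \sum_(i < k) lam i * b i = 1.
  by case: HX => _ [BX _]; rewrite -BX EX frob_sumr.
have [j0 Hj0] : exists j0, 0 < b j0.
  case: (pickP (fun i => 0 < b i)) => [j0 Hj0 | H]; first by exists j0.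
  have : \sum_(i < k) lam i * b i <= 0.
    apply: sumr_le0 => i _; rewrite mulr_ge0_le0 //.
    by rewrite leNgt H.
  by rewrite Bsum; lra.
case: (@arg_minP _ R _ j0 (fun i => 0 < b i) (fun i => m i / b i) Hj0)
  => j Pj Hmin.
pose r := m j / b j.
have Hr : forall i, r * b i <= m i.
  move=> i; case: (ltrP 0 (b i)) => bi.
    have := Hmin i bi; rewrite /r => h.
    by rewrite -ler_pdivlMr.
  have SZ : Scone Ms (b j *: Y i + (- b i) *: Y j).
    apply: SconeD; apply: SconeZ.
    - exact: ltW.
    - by case: (YS i).
    - by rewrite oppr_ge0.
    - by case: (YS j).
  have := key _ SZ; rewrite !frobDr !frobZr -/(b i) -/(b j) -/(m i) -/(m j).
  have -> : b j * b i + - b i * b j = 0 by ring.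
  move=> /(_ erefl) h.
  have rb : r * b j = m j by rewrite /r divfK // gt_eqF.
  have e : b j * (r * b i) = b i * m j by rewrite -rb; ring.
  rewrite -(ler_pM2l Pj) e; lra.
apply: (@le_trans _ _ (r%:E)).
  case: (YS j) => [[pY cY] [xj Yj]].
  apply: ereal_inf_lbound.
  have E : forall A, qform A ((Num.sqrt (b j))^-1 *: xj) = (b j)^-1 * frob A (Y j).
    move=> A; rewrite qform_frob linearZ /= -scalemxAr -scalemxAl scalerA.
    by rewrite -invfM -expr2 sqr_sqrtr ?ltW // frobZr Yj.
  exists ((Num.sqrt (b j))^-1 *: xj); last by rewrite E /r mulrC.
  split.
    move=> A MA; rewrite E; apply: mulr_ge0; first by rewrite invr_ge0 ltW.
    exact: cY.
  by rewrite E mulrC divff // gt_eqF.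
rewrite EX lee_fin frob_sumr.
rewrite -[r]mulr1 -Bsum mulr_sumr; apply: ler_sum => i _.
by rewrite mulrCA ler_wpM2l.
Qed.

Theorem lemma5p2 (R : realType) (n : nat) (Ms : set 'M[R]_n) (B : 'M[R]_n) :
  (forall A, Ms A -> symmx A) -> symmx B ->
  ROG (Scone Ms) ->
  (forall M0 : 'M[R]_n, symmx M0 ->
     (exists c : R, forall X, sdp_feas Ms B X -> c <= frob M0 X) ->
     qcqp_val Ms B M0 = sdp_val Ms B M0) /\
  ((exists r : R, forall X, sdp_feas Ms B X -> forall i j, `|X i j| <= r) ->
   forall M0 : 'M[R]_n, symmx M0 -> qcqp_val Ms B M0 = sdp_val Ms B M0).
Proof.
move=> _ _ hROG; split; first by move=> M0 _; exact: part1.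
move=> [r hr] M0 _; apply: part1 => //.
exists (- \sum_i \sum_j `|M0 i j| * r) => X HX.
have E : frob M0 X = \sum_i \sum_j M0 i j * X j i.
  by rewrite /frob /mxtrace; apply: eq_bigr => i _; rewrite mxE.
have : `|frob M0 X| <= \sum_i \sum_j `|M0 i j| * r.
  rewrite E; apply: (le_trans (ler_norm_sum _ _ _)); apply: ler_sum => i _.
  apply: (le_trans (ler_norm_sum _ _ _)); apply: ler_sum => j _.
  by rewrite normrM ler_wpM2l ?hr.
have := ler_norm (- frob M0 X); rewrite normrN.
lra.
Qed.
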